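(* For integers $n\geq 3$ and $m\geq 2$, the windmill graph $W_n^m$ satisfies $\eta(W_n^m)=n-1$.
   Context: All graphs are finite, simple and undirected. The windmill graph $W_n^m$ consists of $m$ copies of the complete graph $K_n$ sharing a single common vertex; equivalently it is the join of $m$ disjoint copies of $K_{n-1}$ with a single vertex $K_1$. For a vertex $v$, $N(v)$ is its set of neighbours. For a positive integer $k$, $[k]=\{1,\dots,k\}$. For a labeling $f:V(G)\to[k]$ and $S\subseteq V(G)$, $f(S)=\sum_{u\in S}f(u)$. A labeling $f:V(G)\to[k]$ is an additive $k$-coloring if $f(N(u))\neq f(N(v))$ for every edge $(u,v)$ of $G$. The additive chromatic number $\eta(G)$ is the least $k$ for which $G$ has an additive $k$-coloring. *)

(* Defs.v *)
From mathcomp Require Import all_boot.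
Set Implicit Arguments. Unset Strict Implicit. Unset Printing Implicit Defensive.

(* A simple graph on a finite vertex type T is given by an adjacency relation
   e : rel T (assumed symmetric and irreflexive where relevant). *)

Definition nbhd (T : finType) (e : rel T) (v : T) : {set T} := [set u | e v u].

Definition fsum (T : finType) (f : T -> nat) (S : {set T}) : nat :=
  \sum_(u in S) f u.

Definition additive_coloring (T : finType) (e : rel T) (k : nat) (f : T -> nat) : Prop :=
  (forall v, 1 <= f v <= k) /\
  (forall u v, e u v -> fsum f (nbhd e u) <> fsum f (nbhd e v)).

Definition is_additive_chromatic_number (T : finType) (e : rel T) (k : nat) : Prop :=
  (exists f, additive_coloring e k f) /\
  (forall k' f, additive_coloring e k' f -> k <= k').

(* Windmill graph W_n^m: vertices are the centre (None) and Some (i, a),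
   the a-th non-central vertex of the i-th copy of K_n (i < m, a < n-1). *)
Definition windmill_vertex (n m : nat) : finType := option ('I_m * 'I_n.-1).

Definition windmill (n m : nat) : rel (windmill_vertex n m) :=
  fun x y =>
    match x, y with
    | None, None => false
    | None, Some _ => true
    | Some _, None => true
    | Some (i, a), Some (j, b) => (i == j) && (a != b)
    end.
Arguments windmill n m : clear implicits.

(* Main.v *)
Require Import Defs.
From mathcomp Require Import all_boot.
From mathcomp Require Import zify.
Lemma sum_option (T : finType) (F : option T -> nat) :
  \sum_(u : option T) F u = F None + \sum_(x : T) F (Some x).
Proof.
have -> : \sum_(x : T) F (Some x) = \sum_(u <- map Some (enum T)) F u.
  by rewrite big_map big_enum.
have -> : F None + \sum_(u <- map Some (enum T)) F u = \sum_(u <- None :: map Some (enum T)) F u.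
  by rewrite big_cons.
apply: perm_big; apply: uniq_perm.
- by rewrite /index_enum -enumT enum_uniq.
- rewrite /= map_inj_uniq ?enum_uniq //; last by move=> x y [].
  by rewrite andbT; apply/mapP => -[].
move=> [x|]; rewrite /index_enum -enumT mem_enum inE //=.
by rewrite inE map_f // mem_enum.
Qed.

Definition wf (n m : nat) (v : windmill_vertex n m) : nat :=
  match v with None => 1 | Some (_, a) => (nat_of_ord a).+1 end.

Lemma fsum_blade_gen n m (f : windmill_vertex n m -> nat) (i : 'I_m) (a : 'I_n.-1) :
  fsum f (nbhd (windmill n m) (Some (i, a))) = f None + \sum_(b < n.-1 | b != a) f (Some (i, b)).
Proof.
rewrite /fsum big_mkcond sum_option /= inE /=; congr (_ + _).
transitivity (\sum_(j < m) \sum_(b < n.-1) (if Some (j, b) \in nbhd (windmill n m) (Some (i, a)) then f (Some (j,b)) else 0)).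
  by rewrite pair_bigA; apply: eq_bigr => -[j b].
rewrite (bigD1 i) //= [X in _ + X]big1 ?addn0.
  by rewrite [RHS]big_mkcond; apply: eq_bigr => b _; rewrite inE /= eqxx eq_sym.
move=> j /negbTE ji; apply: big1 => b _; rewrite inE /= eq_sym ji //.
Qed.

Lemma fsum_blade n m (i : 'I_m) (a : 'I_n.-1) :
  fsum (@wf n m) (nbhd (windmill n m) (Some (i, a))) = 1 + \sum_(b < n.-1 | b != a) b.+1.
Proof. exact: fsum_blade_gen. Qed.

Lemma fsum_center n m :
  fsum (@wf n m) (nbhd (windmill n m) None) = m * \sum_(b < n.-1) b.+1.
Proof.
rewrite /fsum big_mkcond sum_option /= inE /= add0n.
transitivity (\sum_(j < m) \sum_(b < n.-1) (if Some (j, b) \in nbhd (windmill n m) None then @wf n m (Some (j,b)) else 0)).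
  by rewrite pair_bigA; apply: eq_bigr => -[j b].
rewrite -[m in RHS]card_ord -sum_nat_const; apply: eq_bigr => i _.
by apply: eq_bigr => b _; rewrite inE.
Qed.

Theorem mainTheorem7 (n m : nat) :
  3 <= n -> 2 <= m -> is_additive_chromatic_number (windmill n m) n.-1.
Proof.
move=> n3 m2.
set s := \sum_(b < n.-1) b.+1.
have Hs : forall a : 'I_n.-1, \sum_(b < n.-1 | b != a) b.+1 + a.+1 = s.
  move=> a; rewrite /s [in RHS](bigD1 a) //=. exact: addnC.
split.
  exists (@wf n m); split.
    case=> [[i a]|] /=; last by lia.
    by rewrite ltn_ord.
  case=> [[i a]|]; case=> [[j b]|] //=.
  - move=> /andP [/eqP <- ab]; rewrite !fsum_blade => /eqP.
    rewrite eqn_add2l => /eqP E; move: (Hs a) (Hs b); rewrite E => Ha Hb.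
    have : a.+1 = b.+1 :> nat by lia.
    by move=> [] /val_inj Eab; rewrite Eab eqxx in ab.
  - move=> _; rewrite fsum_blade fsum_center; have := Hs a; nia.
  - move=> _; rewrite fsum_blade fsum_center; have := Hs b; nia.
move=> k f [Hf He].
have m0 : 0 < m by lia.
pose i0 : 'I_m := Ordinal m0.
pose g := fun b : 'I_n.-1 => f (Some (i0, b)).
have Hg : forall a : 'I_n.-1, \sum_(b < n.-1 | b != a) g b + g a = \sum_(b < n.-1) g b.
  by move=> a; rewrite [in RHS](bigD1 a) //=; exact: addnC.
have ginj : injective g.
  move=> a b Eab; apply/eqP; apply/negP => /negP ab.
  have := He (Some (i0, a)) (Some (i0, b)); rewrite /windmill /= => /(_ ab) H; apply: H.

  rewrite !fsum_blade_gen; have Ha := Hg a; have Hb := Hg b; rewrite /g in Ha Hb Eab; lia.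
have := @uniq_leq_size _ (map g (enum 'I_n.-1)) (iota 1 k).
rewrite size_map size_enum_ord size_iota; apply.
  by rewrite map_inj_uniq ?enum_uniq.
move=> x /mapP [b _ ->]; rewrite mem_iota; have := Hf (Some (i0, b)); rewrite /g; by case/andP => -> /=; rewrite add1n ltnS.
Qed.
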